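(* Let $1\le k\le n$ be integers, $\boldsymbol c\in\mathbb{R}^n$, and $\boldsymbol E\in\mathbb{R}^{n\times d}$ with unit-norm rows $\boldsymbol e_1,\dots,\boldsymbol e_n$ satisfying $\boldsymbol e_i^{\mathsf T}\boldsymbol e_j>-1$ for all $i\ne j$. Let $\lambda\ge 2$, $\theta\in[0,1)$, and $$f(\boldsymbol x)=\theta\,(k-1)\,\boldsymbol c^{\mathsf T}\boldsymbol x+(1-\theta)\,\boldsymbol x^{\mathsf T}(\lambda \boldsymbol I-\boldsymbol E\boldsymbol E^{\mathsf T})\boldsymbol x ,$$ considered on the feasible set $P=\{\boldsymbol x\in[0,1]^n:\boldsymbol 1^{\mathsf T}\boldsymbol x=k\}$. Then every stationary point $\boldsymbol x\in P$ of $\max_{P} f$ is either a local maximizer of $f$ on $P$, or a strict saddle in the following sense: there exist distinct indices $i,j$ and $\delta>0$ such that $\boldsymbol x+\delta(\boldsymbol e^{(i)}-\boldsymbol e^{(j)})\in P$, $\partial_i f(\boldsymbol x)=\partial_j f(\boldsymbol x)$, and the curvature $(\boldsymbol e^{(i)}-\boldsymbol e^{(j)})^{\mathsf T}\nabla^2 f\,(\boldsymbol e^{(i)}-\boldsymbol e^{(j)})=4(1-\theta)(\lambda-1+\boldsymbol e_i^{\mathsf T}\boldsymbol e_j)$ is strictly positive, so that $f(\boldsymbol x+\delta(\boldsymbol e^{(i)}-\boldsymbol e^{(j)}))>f(\boldsymbol x)$. Furthermore, every local maximizer of $f$ on $P$ is integral, i.e. lies in $\{0,1\}^n$.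
   Context: Here $\boldsymbol e^{(i)}$ denotes the $i$-th standard basis vector of $\mathbb{R}^n$ (distinct from the row $\boldsymbol e_i$ of $\boldsymbol E$). A stationary point is a KKT point of $\max_P f$: there is $\mu\in\mathbb{R}$ with $\partial_i f(\boldsymbol x)\le\mu$ whenever $x_i=0$, $\partial_i f(\boldsymbol x)\ge\mu$ whenever $x_i=1$, and $\partial_i f(\boldsymbol x)=\mu$ whenever $0<x_i<1$. A local maximizer is a point $\boldsymbol x^\ast\in P$ with $f(\boldsymbol x)\le f(\boldsymbol x^\ast)$ for all $\boldsymbol x\in P$ in some neighborhood of $\boldsymbol x^\ast$. *)

(* Defs.v *)
From HB Require Import structures.
From mathcomp Require Import all_boot all_order all_algebra.
From mathcomp Require Import all_classical all_reals all_analysis.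
Set Implicit Arguments. Unset Strict Implicit. Unset Printing Implicit Defensive.
Import Order.TTheory GRing.Theory Num.Theory.
Import numFieldNormedType.Exports.
Local Open Scope ring_scope.
Local Open Scope classical_set_scope.

Section Defs.
Variable R : realType.

Definition ebasis (n : nat) (i : 'I_n) : 'rV[R]_n := delta_mx 0 i.

Definition rowdot (n d : nat) (E : 'M[R]_(n, d)) (a b : 'I_n) : R :=
  \sum_(l < d) E a l * E b l.

Definition fobj (n d k : nat) (theta lambda : R) (c : 'rV[R]_n)
  (E : 'M[R]_(n, d)) (x : 'rV[R]_n) : R :=
  theta * (k%:R - 1) * (c *m x^T) 0 0
  + (1 - theta) * (x *m (lambda%:M - E *m E^T) *m x^T) 0 0.

Definition feasible (n k : nat) (x : 'rV[R]_n) : Prop :=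
  (forall i, 0 <= x 0 i <= 1) /\ \sum_(i < n) x 0 i = k%:R.

Definition partial n (f : 'rV[R]_n -> R) (x : 'rV[R]_n) (i : 'I_n) : R :=
  'D_(ebasis i) f x.

(* KKT stationary point of max_P f *)
Definition stationary n (f : 'rV[R]_n -> R) (x : 'rV[R]_n) : Prop :=
  exists mu : R, forall i : 'I_n,
    (x 0 i = 0 -> partial f x i <= mu) /\
    (x 0 i = 1 -> partial f x i >= mu) /\
    (0 < x 0 i < 1 -> partial f x i = mu).

Definition local_max n (P : 'rV[R]_n -> Prop) (f : 'rV[R]_n -> R)
  (x : 'rV[R]_n) : Prop :=
  P x /\ \forall y \near x, P y -> f y <= f x.

Definition curvature n (f : 'rV[R]_n -> R) (x u : 'rV[R]_n) : R :=
  'D_u (fun y => 'D_u f y) x.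

End Defs.

(* Main.v *)
Require Import Defs.
From HB Require Import structures.
From mathcomp Require Import all_boot all_order all_algebra.
From mathcomp Require Import all_classical all_reals all_analysis.
From mathcomp Require Import ring lra.
Set Implicit Arguments. Unset Strict Implicit.
Import Order.TTheory GRing.Theory Num.Theory.
Import numFieldNormedType.Exports.
Local Open Scope ring_scope.
Local Open Scope classical_set_scope.

Lemma D_quad (R : realType) n (F : 'rV[R]_n -> R) a v (A B : R) :
  (forall h : R, F (h *: v + a) = F a + h * A + h^+2 * B) -> 'D_v F a = A.
Proof.
move=> H; rewrite /derive; apply: cvg_lim => //.
apply: (@cvg_trans _ ((fun h : R => A + h * B) @ 0^')).
  apply: near_eq_cvg; near=> h.
  have h0 : h != 0 by near: h; exact: nbhs_dnbhs_neq.
  rewrite /= H /GRing.scale /=; field; exact: h0.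
apply: cvg_within_filter.
have : (fun h : R => A + h * B) @ (0:R) --> A + 0 * B.
  apply: cvgD; first exact: cvg_cst.
  apply: cvgMl; exact: cvg_id.
by rewrite mul0r addr0.
Unshelve. all: by end_near.
Qed.

Lemma fin_argmin (R : realType) (T : finType) (p : pred T) (F : T -> R) t0 :
  p t0 -> exists t, p t /\ forall s, p s -> F t <= F s.
Proof.
move=> pt0; case: (@arg_minP _ R T t0 p F pt0) => t pt H.
by exists t; split => // s ps; apply: H.
Qed.

Section Alg.
Variables (R : realType) (n d : nat) (lambda : R) (E : 'M[R]_(n, d)).
Definition Q : 'M[R]_n := lambda%:M - E *m E^T.
Definition Bf (u v : 'rV[R]_n) : R := (u *m Q *m v^T) 0 0.

Lemma QT : Q^T = Q.
Proof. by rewrite /Q linearB /= tr_scalar_mx trmx_mul trmxK. Qed.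

Lemma Bf_Dl u v w : Bf (u + v) w = Bf u w + Bf v w.
Proof. by rewrite /Bf !mulmxDl mxE. Qed.
Lemma Bf_Dr u v w : Bf u (v + w) = Bf u v + Bf u w.
Proof. by rewrite /Bf [(v + w)^T]linearD /= mulmxDr mxE. Qed.
Lemma Bf_Zl t u v : Bf (t *: u) v = t * Bf u v.
Proof. by rewrite /Bf -!scalemxAl mxE. Qed.
Lemma Bf_Zr t u v : Bf u (t *: v) = t * Bf u v.
Proof. by rewrite /Bf [(t *: v)^T]linearZ /= -scalemxAr mxE. Qed.
Lemma Bf_Nr u v : Bf u (- v) = - Bf u v.
Proof. by rewrite -scaleN1r Bf_Zr mulN1r. Qed.
Lemma Bf_Nl u v : Bf (- u) v = - Bf u v.
Proof. by rewrite -scaleN1r Bf_Zl mulN1r. Qed.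
Lemma Bf_sym u v : Bf u v = Bf v u.
Proof.
rewrite /Bf; have -> : (u *m Q *m v^T) 0 0 = ((u *m Q *m v^T)^T) 0 0 by rewrite [RHS]mxE.
by rewrite !trmx_mul trmxK QT mulmxA.
Qed.

Lemma QE i j : Q i j = lambda * (i == j)%:R - rowdot E i j.
Proof.
rewrite /Q !mxE /rowdot; congr (_ - _); first by rewrite mulr_natr.
by apply: eq_bigr => l _; rewrite mxE.
Qed.

Lemma Bf_basis i j : Bf (ebasis R i) (ebasis R j) = Q i j.
Proof. by rewrite /Bf /ebasis trmx_delta -rowE -colE !mxE. Qed.

Lemma BfE u v : Bf u v = \sum_b (\sum_a u 0 a * Q a b) * v 0 b.
Proof. by rewrite /Bf mxE; apply: eq_bigr => b _; rewrite !mxE. Qed.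

Variables (k : nat) (theta : R) (c : 'rV[R]_n).
Definition ca : R := theta * (k%:R - 1).
Definition cb : R := 1 - theta.
Definition Cf (v : 'rV[R]_n) : R := (c *m v^T) 0 0.
Definition Lf (x h : 'rV[R]_n) : R := ca * Cf h + 2 * cb * Bf x h.

Lemma Cf_D u v : Cf (u + v) = Cf u + Cf v.
Proof. by rewrite /Cf [(u + v)^T]linearD /= mulmxDr mxE. Qed.
Lemma Cf_Z t u : Cf (t *: u) = t * Cf u.
Proof. by rewrite /Cf [(t *: u)^T]linearZ /= -scalemxAr mxE. Qed.
Lemma Cf_N u : Cf (- u) = - Cf u.
Proof. by rewrite -scaleN1r Cf_Z mulN1r. Qed.
Lemma Cf_basis i : Cf (ebasis R i) = c 0 i.
Proof. by rewrite /Cf /ebasis trmx_delta -colE !mxE. Qed.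
Lemma CfE v : Cf v = \sum_b c 0 b * v 0 b.
Proof. by rewrite /Cf mxE; apply: eq_bigr => b _; rewrite !mxE. Qed.

Lemma fobjE x : fobj k theta lambda c E x = ca * Cf x + cb * Bf x x.
Proof. by []. Qed.

Lemma f_exp x h : fobj k theta lambda c E (x + h) =
  fobj k theta lambda c E x + Lf x h + cb * Bf h h.
Proof.
rewrite !fobjE /Lf Cf_D !Bf_Dl !Bf_Dr (Bf_sym h x); ring.
Qed.

Lemma Lf_Z x t h : Lf x (t *: h) = t * Lf x h.
Proof. rewrite /Lf Cf_Z Bf_Zr; ring. Qed.
Lemma Lf_B x u w : Lf x (u - w) = Lf x u - Lf x w.
Proof. rewrite /Lf Cf_D Cf_N Bf_Dr Bf_Nr; ring. Qed.
Lemma Lf_Dl x y h : Lf (x + y) h = Lf x h + 2 * cb * Bf y h.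
Proof. rewrite /Lf Bf_Dl; ring. Qed.

Lemma f_line x v t : fobj k theta lambda c E (t *: v + x) =
  fobj k theta lambda c E x + t * Lf x v + t ^+ 2 * (cb * Bf v v).
Proof. rewrite addrC f_exp Lf_Z Bf_Zl Bf_Zr; ring. Qed.

Lemma deriveE x v : 'D_v (fobj k theta lambda c E) x = Lf x v.
Proof. by apply: D_quad => t; rewrite f_line. Qed.

Lemma curvE x u : curvature (fobj k theta lambda c E) x u = 2 * cb * Bf u u.
Proof.
rewrite /curvature.
have -> : (fun y => 'D_u (fobj k theta lambda c E) y) = (fun y => Lf y u).
  by apply: funext => y; rewrite deriveE.
by apply: (D_quad (B:=0)) => t; rewrite addrC Lf_Dl Bf_Zl; ring.
Qed.

Lemma Lf_basis x i : Lf x (ebasis R i) = ca * c 0 i + 2 * cb * (x *m Q) 0 i.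
Proof. by rewrite /Lf Cf_basis /Bf /ebasis trmx_delta -colE !mxE. Qed.

Lemma LfE x h : Lf x h = \sum_i Lf x (ebasis R i) * h 0 i.
Proof.
rewrite (eq_bigr (fun i => (ca * c 0 i + 2 * cb * (x *m Q) 0 i) * h 0 i)); last first.
  by move=> i _; rewrite Lf_basis.
rewrite /Lf CfE /Bf mxE mulr_sumr mulr_sumr -big_split /=.
apply: eq_bigr => i _; rewrite !mxE; ring.
Qed.
End Alg.

Lemma ebasisE (R : realType) n (i l : 'I_n) : (ebasis R i) 0 l = (l == i)%:R.
Proof. by rewrite /ebasis mxE eqxx. Qed.

Lemma rowdotC (R : realType) n d (E : 'M[R]_(n, d)) i j : rowdot E i j = rowdot E j i.
Proof. by apply: eq_bigr => l _; rewrite mulrC. Qed.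

Lemma sum_delta (R : realType) n (i : 'I_n) : \sum_(l < n) ((l == i)%:R : R) = 1.
Proof.
rewrite (bigD1 i) //= eqxx big1 ?addr0 // => l /negbTE -> //.
Qed.

Lemma moveE (R : realType) n (x : 'rV[R]_n) i j t l :
  (x + t *: (ebasis R i - ebasis R j)) 0 l = x 0 l + t * ((l == i)%:R - (l == j)%:R).
Proof. by rewrite !mxE. Qed.

Lemma move_feas (R : realType) n k (x : 'rV[R]_n) i j t :
  feasible k x -> i != j -> 0 <= t -> x 0 i + t <= 1 -> 0 <= x 0 j - t ->
  feasible k (x + t *: (ebasis R i - ebasis R j)).
Proof.
move=> [hb hs] ij t0 hi hj; split.
  move=> l; rewrite moveE.
  have [-> | li] := eqVneq l i.
    rewrite (negbTE ij) subr0 mulr1; have := hb i; lra.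
  have [-> | lj] := eqVneq l j.
    rewrite sub0r mulrN1; have := hb j; lra.
  rewrite subr0 mulr0 addr0; exact: hb.
under eq_bigr do rewrite moveE.
rewrite big_split /= -mulr_sumr sumrB !sum_delta subrr mulr0 addr0; exact: hs.
Qed.

Lemma frac2 (R : realType) n k (x : 'rV[R]_n) i :
  feasible k x -> 0 < x 0 i < 1 -> exists j, j != i /\ 0 < x 0 j < 1.
Proof.
move=> [hb hs] hi.
case: (pselect (exists j, j != i /\ 0 < x 0 j < 1)) => // hno; exfalso.
have h01 : forall j, j != i -> x 0 j = (x 0 j == 1)%:R.
  move=> j ji; have /andP[h0 h1] := hb j.
  have [-> //|xne1] := eqVneq (x 0 j) 1.
  have [-> //|xne0] := eqVneq (x 0 j) 0.
  exfalso; apply: hno; exists j; split => //.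
  by rewrite !lt_neqAle h0 h1 xne1 eq_sym xne0.
rewrite (bigD1 i) //= in hs.
rewrite (eq_bigr (fun j => ((x 0 j == 1 : nat)%:R : R))) in hs; last by move=> j /h01.
rewrite -natr_sum in hs.
move: hs; set m := (\sum_(j < n | j != i) _)%N => hs.
have hxi : x 0 i = k%:R - m%:R by rewrite -hs addrK.
case/andP: hi; rewrite hxi.
case: (leqP m k) => hmk.
  rewrite -natrB // ltr0n ltrn1 => h1 h2; move: h1 h2; case: (k - m)%N => //.
move=> h1 _; move: h1; rewrite subr_gt0 ltr_nat => h; move: (ltn_trans h hmk).
by rewrite ltnn.
Qed.

Lemma entry_le (R : realType) n (M : 'rV[R]_n) l : `|M 0 l| <= `|M|.
Proof.
rewrite [X in _ <= X]mx_normrE.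
exact: (le_bigmax _ (fun ij : 'I_1 * 'I_n => `|M ij.1 ij.2|) (0, l)).
Qed.

Lemma min_le_l (R : realType) (a b : R) : Num.min a b <= a.
Proof. by rewrite ge_min lexx. Qed.
Lemma min_le_r (R : realType) (a b : R) : Num.min a b <= b.
Proof. by rewrite ge_min lexx orbT. Qed.

Section Main.
Variables (R : realType) (n d k : nat) (c : 'rV[R]_n) (E : 'M[R]_(n, d)) (lambda theta : R).
Hypotheses (hdiag : forall i, rowdot E i i = 1)
  (hoff : forall i j, i != j -> rowdot E i j > -1)
  (hl : 2 <= lambda) (ht0 : 0 <= theta) (ht1 : theta < 1) (hk1 : (1 <= k)%N).
Notation f := (fobj k theta lambda c E).
Notation g x i := (Lf lambda E k theta c x (ebasis R i)).
Notation u i j := (ebasis R i - ebasis R j).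

Lemma Bf_pair i j : i != j -> Bf lambda E (u i j) (u i j) = 2 * (lambda - 1 + rowdot E i j).
Proof.
move=> ij; have ji : (j == i) = false by rewrite eq_sym (negbTE ij).
rewrite Bf_Dl Bf_Nl !Bf_Dr !Bf_Nr !Bf_basis !QE !eqxx (negbTE ij) ji !hdiag (rowdotC E j i).
rewrite /=; ring.
Qed.

Lemma pos_pair i j : i != j -> 0 < 4 * (1 - theta) * (lambda - 1 + rowdot E i j).
Proof.
move=> ij; apply: mulr_gt0; first by apply: mulr_gt0 => //; have := ht1; lra.
have := hoff ij; have := hl; lra.
Qed.

Lemma f_move x v t : f (x + t *: v) =
  f x + t * Lf lambda E k theta c x v + t ^+ 2 * (cb theta * Bf lambda E v v).
Proof. by rewrite f_exp Lf_Z Bf_Zl Bf_Zr; ring. Qed.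

Lemma partialE x i : partial f x i = g x i.
Proof. exact: deriveE. Qed.

Lemma saddle x i j delta : i != j -> 0 < delta -> feasible k (x + delta *: u i j) ->
  g x i = g x j ->
  exists delta : R, 0 < delta /\
         feasible k (x + delta *: u i j) /\
         partial f x i = partial f x j /\
         curvature f x (u i j)
           = 4 * (1 - theta) * (lambda - 1 + rowdot E i j) /\
         0 < 4 * (1 - theta) * (lambda - 1 + rowdot E i j) /\
         f x < f (x + delta *: u i j).
Proof.
move=> ij d0 hP hg; exists delta; split; first exact: d0.
split; first exact: hP.
split; first by rewrite !partialE.
split; first by rewrite curvE Bf_pair // /cb; ring.
split; first exact: pos_pair.
rewrite f_move Lf_B hg subrr mulr0 addr0 Bf_pair // -ltrBlDl subrr.
apply: mulr_gt0; first exact: exprn_gt0.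
apply: mulr_gt0; first by rewrite /cb; have := ht1; lra.
apply: mulr_gt0 => //.
have := hoff ij; have := hl; lra.
Qed.

Lemma locmax_int x : local_max (feasible k) f x -> forall i, x 0 i = 0 \/ x 0 i = 1.
Proof.
move=> [hP hnear] i.
have /andP[hi0 hi1] := hP.1 i.
have [->|xi0] := eqVneq (x 0 i) 0; first by left.
have [->|xi1] := eqVneq (x 0 i) 1; first by right.
exfalso.
have hi : 0 < x 0 i < 1 by rewrite !lt_neqAle eq_sym xi0 xi1 hi0 hi1.
have [j [ji hj]] := frac2 hP hi.
have ij : i != j by rewrite eq_sym.
case/andP: hi => hi0' hi1'; case/andP: hj => hj0 hj1.
case/nbhs_normP: hnear => e e0 he; have {}e0 : 0 < e := e0.
set v := u i j; set w := u j i.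
set m := Num.min (Num.min (x 0 i) (1 - x 0 i)) (Num.min (x 0 j) (1 - x 0 j)).
have m0 : 0 < m by rewrite !lt_min hi0' hj0 !subr_gt0 hi1' hj1.
set N := `|v| + `|w| + 1.
have N0 : 0 < N by rewrite /N ltr_wpDl // addr_ge0.
set t := Num.min m (e / (2 * N)).
have t0 : 0 < t by rewrite lt_min m0 divr_gt0 // mulr_gt0.
have tm : t <= m := min_le_l _ _.
have tN : t * N < e.
  have h1 : t <= e / (2 * N) := min_le_r _ _.
  have : t * N <= e / (2 * N) * N := ler_wpM2r (ltW N0) h1.
  have -> : e / (2 * N) * N = e / 2.
    by field; rewrite (gt_eqF N0).
  move=> h; apply: (le_lt_trans h); have := e0; lra.
have hmi : m <= Num.min (x 0 i) (1 - x 0 i) := min_le_l _ _.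
have hmj : m <= Num.min (x 0 j) (1 - x 0 j) := min_le_r _ _.
have ti1 : t <= 1 - x 0 i := le_trans tm (le_trans hmi (min_le_r _ _)).
have ti0 : t <= x 0 i := le_trans tm (le_trans hmi (min_le_l _ _)).
have tj1 : t <= 1 - x 0 j := le_trans tm (le_trans hmj (min_le_r _ _)).
have tj0 : t <= x 0 j := le_trans tm (le_trans hmj (min_le_l _ _)).
have Pv : feasible k (x + t *: v).
  by apply: move_feas => //; [exact: ltW | lra | lra].
have Pw : feasible k (x + t *: w).
  by apply: move_feas => //; [exact: ltW | lra | lra].
have nv : `|v| <= N by rewrite /N -addrA lerDl addr_ge0.
have nw : `|w| <= N by rewrite /N addrAC lerDr addr_ge0.
have fv : f (x + t *: v) <= f x.
  apply: he => //=; rewrite opprD addrA subrr add0r normrN normrZ gtr0_norm //.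
  apply: (le_lt_trans _ tN); by rewrite ler_pM2l.
have fw : f (x + t *: w) <= f x.
  apply: he => //=; rewrite opprD addrA subrr add0r normrN normrZ gtr0_norm //.
  apply: (le_lt_trans _ tN); by rewrite ler_pM2l.
move: fv fw; rewrite !f_move /v /w !Lf_B !Bf_pair // (rowdotC E j i).
have hpos : 0 < t ^+ 2 * (cb theta * (2 * (lambda - 1 + rowdot E i j))).
  apply: mulr_gt0; first exact: exprn_gt0.
  apply: mulr_gt0; first by rewrite /cb; have := ht1; lra.
  apply: mulr_gt0 => //; have := hoff ij; have := hl; lra.
move: hpos.
set Z := t ^+ 2 * _.
set L := Lf _ _ _ _ _ x (ebasis R i) - Lf _ _ _ _ _ x (ebasis R j).
have -> : Lf lambda E k theta c x (ebasis R j) - Lf lambda E k theta c x (ebasis R i) = - L.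
  by rewrite /L opprB.
move=> hZ h1 h2; have := mulrN t L; lra.
Qed.

Lemma locmax_of_int x (mu : R) :
  feasible k x -> (forall i, x 0 i = 0 \/ x 0 i = 1) ->
  (forall i, (x 0 i = 0 -> g x i <= mu) /\ (x 0 i = 1 -> g x i >= mu)) ->
  ~ (exists i j, x 0 i = 0 /\ x 0 j = 1 /\ g x i = g x j) ->
  local_max (feasible k) f x.
Proof.
move=> hP h01 hmu hng; split; first exact: hP.
have hlt : forall i j, x 0 i = 0 -> x 0 j = 1 -> g x i < g x j.
  move=> i j hi hj; rewrite lt_neqAle; apply/andP; split.
    by apply/eqP => e; apply: hng; exists i, j.
  exact: le_trans ((hmu i).1 hi) ((hmu j).2 hj).
have [j0 hj0] : exists j0, x 0 j0 = 1.
  case: (pselect (exists j0, x 0 j0 = 1)) => // hno; exfalso.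
  have := hP.2; rewrite big1; last first.
    by move=> i _; case: (h01 i) => // h; exfalso; apply: hno; exists i.
  by move/eqP; rewrite eq_sym pnatr_eq0 => /eqP hk; move: hk1; rewrite hk.
have [js [/eqP hjs hjsmin]] := @fin_argmin R _ (fun j => x 0 j == 1) (fun j => g x j) j0 (introT eqP hj0).
have [ga [ga0 hga]] : exists ga : R, 0 < ga /\ forall i, x 0 i = 0 -> g x i + ga <= g x js.
  case: (pickP (fun i => x 0 i == 0)) => [i0 hi0 | hnone].
    have [i1 [/eqP hi1x hismax]] :=
      @fin_argmin R _ (fun i => x 0 i == 0) (fun i => - g x i) i0 hi0.
    exists (g x js - g x i1); split; first by rewrite subr_gt0; apply: hlt.
    move=> i hi; have := hismax i (introT eqP hi); lra.
  by exists 1; split => // i hi; move: (hnone i); rewrite hi eqxx.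
set K := \sum_b \sum_a `|Q lambda E a b|.
have K0 : 0 <= K by apply: sumr_ge0 => b _; apply: sumr_ge0 => a _.
have cb0 : 0 <= cb theta by rewrite /cb; have := ht1; lra.
set M := (cb theta * K + 1) * (n%:R + 1).
have M0 : 0 < M by rewrite /M mulr_gt0 // ltr_wpDl // mulr_ge0.
set eps := ga / M.
have epsM : eps * M = ga by rewrite /eps divfK // gt_eqF.
have eps0 : 0 < eps by rewrite /eps divr_gt0.
apply/nbhs_normP; exists eps => //= y hy hPy.
set h := y - x.
have yE : y = x + h by rewrite /h addrC subrK.
have hE : forall l, h 0 l = y 0 l - x 0 l by move=> l; rewrite !mxE.
have hh0 : forall l, x 0 l = 0 -> 0 <= h 0 l.
  by move=> l hl0; rewrite hE hl0 subr0; case/andP: (hPy.1 l).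
have hh1 : forall l, x 0 l = 1 -> h 0 l <= 0.
  by move=> l hl1; rewrite hE hl1 subr_le0; case/andP: (hPy.1 l).
have hsum : \sum_l h 0 l = 0.
  by under eq_bigr do rewrite hE; rewrite sumrB hPy.2 hP.2 subrr.
have hnorm : forall l, `|h 0 l| < eps.
  move=> l; apply: le_lt_trans (entry_le h l) _; by rewrite /h distrC.
set s := \sum_(l | x 0 l == 0) h 0 l.
set S2 := \sum_(l | x 0 l != 0) h 0 l.
have hsS : s + S2 = 0.
  by rewrite -hsum [RHS](bigID (fun l => x 0 l == 0)).
have hx1 : forall l, x 0 l != 0 -> x 0 l = 1.
  by move=> l /eqP hq; case: (h01 l).
have s0 : 0 <= s by apply: sumr_ge0 => l /eqP; exact: hh0.
have hlin : Lf lambda E k theta c x h <= - ga * s.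
  rewrite LfE (bigID (fun l => x 0 l == 0)) /=.
  have A : \sum_(l | x 0 l == 0) g x l * h 0 l <= \sum_(l | x 0 l == 0) (g x js - ga) * h 0 l.
    apply: ler_sum => l /eqP hq; apply: ler_wpM2r; first exact: hh0.
    have := hga l hq; lra.
  have B : \sum_(l | x 0 l != 0) g x l * h 0 l <= \sum_(l | x 0 l != 0) g x js * h 0 l.
    apply: ler_sum => l hq; apply: ler_wnM2r; first exact: hh1 (hx1 l hq).
    exact: hjsmin (introT eqP (hx1 l hq)).
  rewrite -!mulr_sumr -/s -/S2 in A B.
  have hS2 : S2 = - s by lra.
  rewrite hS2 mulrN in B.
  have : (g x js - ga) * s = g x js * s - ga * s by ring.
  move: A B; set G := g x js * s; set G2 := ga * s; rewrite mulNr -/G2.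
  lra.
have hbnd : forall l, `|h 0 l| <= s.
  move=> l; case: (h01 l) => hq.
    rewrite ger0_norm; last exact: hh0.
    rewrite /s (bigD1 l) /=; last by rewrite hq eqxx.
    rewrite lerDl; apply: sumr_ge0 => l' /andP[/eqP hq' _]; exact: hh0.
  rewrite ler0_norm; last exact: hh1.
  have -> : s = - S2 by lra.
  rewrite lerN2 /S2 (bigD1 l) /=; last by rewrite hq oner_eq0.
  rewrite gerDl; apply: sumr_le0 => l' /andP[hq' _]; exact: hh1 (hx1 l' hq').
have hquad : Bf lambda E h h <= K * s ^+ 2.
  rewrite BfE; apply: le_trans (ler_norm _) _.
  apply: le_trans (ler_norm_sum _ _ _) _.
  rewrite /K mulr_suml; apply: ler_sum => b _.
  rewrite normrM mulr_suml.
  apply: le_trans (ler_wpM2r (normr_ge0 _) (ler_norm_sum _ _ _)) _.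
  rewrite mulr_suml; apply: ler_sum => a _.
  rewrite normrM expr2 [s * s]mulrC mulrA.
  apply: ler_pM; [exact: mulr_ge0 | exact: normr_ge0 | | exact: hbnd].
  by rewrite mulrC; apply: ler_wpM2l; [exact: normr_ge0 | exact: hbnd].
have hsn : s <= n%:R * eps.
  have : s <= \sum_(l < n) `|h 0 l|.
    rewrite /s big_mkcond /=; apply: ler_sum => l _.
    by case: ifP => _; [exact: ler_norm | exact: normr_ge0].
  move=> h1; apply: le_trans h1 _.
  have : \sum_(l < n) `|h 0 l| <= \sum_(l < n) eps.
    by apply: ler_sum => l _; exact: ltW.
  by move=> h2; rewrite sumr_const card_ord -mulr_natl in h2.
have q1 : cb theta * K * s <= ga.
  have hc : 0 <= cb theta * K by exact: mulr_ge0.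
  have e1 : cb theta * K * s <= (cb theta * K + 1) * s by rewrite ler_wpM2r // lerDl.
  have e2 : (cb theta * K + 1) * s <= (cb theta * K + 1) * (n%:R * eps).
    by rewrite ler_wpM2l // addr_ge0.
  have e3 : (cb theta * K + 1) * (n%:R * eps) <= M * eps.
    rewrite /M -mulrA ler_wpM2l ?addr_ge0 // ler_wpM2r ?(ltW eps0) //.
    by rewrite lerDl.
  apply: le_trans e1 _; apply: le_trans e2 _; by rewrite -epsM [eps * M]mulrC.
rewrite yE f_exp.
have q2 : cb theta * Bf lambda E h h <= cb theta * K * s * s.
  by rewrite -mulrA -expr2 -mulrA ler_wpM2l.
have q3 : cb theta * K * s * s <= ga * s by exact: ler_wpM2r.
lra.
Qed.

Lemma stat_dich x : feasible k x -> stationary f x ->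
  local_max (feasible k) f x \/
  exists i j : 'I_n, i != j /\
       exists delta : R, 0 < delta /\
         feasible k (x + delta *: u i j) /\
         partial f x i = partial f x j /\
         curvature f x (u i j)
           = 4 * (1 - theta) * (lambda - 1 + rowdot E i j) /\
         0 < 4 * (1 - theta) * (lambda - 1 + rowdot E i j) /\
         f x < f (x + delta *: u i j).
Proof.
move=> hP [mu hmu].
have hmu' : forall i, (x 0 i = 0 -> g x i <= mu) /\ (x 0 i = 1 -> g x i >= mu) /\
    (0 < x 0 i < 1 -> g x i = mu).
  by move=> i; rewrite -!partialE; exact: hmu.
case: (pselect (exists i, 0 < x 0 i < 1)) => [[i hi]|hint].
  have [j [ji hj]] := frac2 hP hi.
  have ij : i != j by rewrite eq_sym.
  right; exists i, j; split => //.
  have gi := (hmu' i).2.2 hi; have gj := (hmu' j).2.2 hj.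
  case/andP: hi => hi0 hi1; case/andP: hj => hj0 hj1.
  have d0 : 0 < Num.min (1 - x 0 i) (x 0 j) by rewrite lt_min subr_gt0 hi1 hj0.
  apply: (@saddle x i j (Num.min (1 - x 0 i) (x 0 j))) => //; last by rewrite gi gj.
  apply: move_feas => //; first exact: ltW.
    by have := min_le_l (1 - x 0 i) (x 0 j); lra.
  by have := min_le_r (1 - x 0 i) (x 0 j); lra.
have h01 : forall i, x 0 i = 0 \/ x 0 i = 1.
  move=> i; have /andP[a b] := hP.1 i.
  have [->|n0] := eqVneq (x 0 i) 0; first by left.
  have [->|n1] := eqVneq (x 0 i) 1; first by right.
  by exfalso; apply: hint; exists i; rewrite !lt_neqAle eq_sym n0 n1 a b.
case: (pselect (exists i j, x 0 i = 0 /\ x 0 j = 1 /\ g x i = g x j)) =>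
    [[i [j [hi [hj hg]]]]|hng].
  have ij : i != j.
    by apply/eqP => e; move: hi; rewrite e hj => /eqP; rewrite oner_eq0.
  right; exists i, j; split => //.
  apply: (@saddle x i j 1) => //.
  by apply: move_feas => //; rewrite ?hi ?hj; lra.
left; apply: (@locmax_of_int x mu) => // i.
by split; [exact: (hmu' i).1 | exact: (hmu' i).2.1].
Qed.
End Main.

Unset Implicit Arguments.
Local Close Scope classical_set_scope.

Theorem theorem2 (R : realType) (n d k : nat) (c : 'rV[R]_n) (E : 'M[R]_(n, d))
  (lambda theta : R) :
  (1 <= k)%N -> (k <= n)%N ->
  (forall i : 'I_n, rowdot E i i = 1) ->
  (forall i j : 'I_n, i != j -> rowdot E i j > -1) ->
  2 <= lambda -> 0 <= theta -> theta < 1 ->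
  let f := fobj k theta lambda c E in
  let P := @feasible R n k in
  (forall x : 'rV[R]_n, P x -> stationary f x ->
     local_max P f x \/
     exists i j : 'I_n, i != j /\
       exists delta : R, 0 < delta /\
         P (x + delta *: (ebasis R i - ebasis R j)) /\
         partial f x i = partial f x j /\
         curvature f x (ebasis R i - ebasis R j)
           = 4 * (1 - theta) * (lambda - 1 + rowdot E i j) /\
         0 < 4 * (1 - theta) * (lambda - 1 + rowdot E i j) /\
         f x < f (x + delta *: (ebasis R i - ebasis R j)))
  /\
  (forall x : 'rV[R]_n, local_max P f x ->
     forall i : 'I_n, x 0 i = 0 \/ x 0 i = 1).
Proof.
move=> hk1 hkn hdiag hoff hl ht0 ht1 f P; split.
  by move=> x hP hst; exact: (stat_dich hdiag hoff hl ht1 hk1 hP hst).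
by move=> x hx; exact: (locmax_int hdiag hoff hl ht1 hx).
Qed.
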